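(* Let $B',B''\subseteq\widetilde\Sigma^*\setminus\mathring\Sigma^+$ be bases in decomposed form, $B'$ with scaffold $sc'$ and fill $fl'$, $B''$ with scaffold $sc''$ and fill $fl''$. If $B'$ and $B''$ are concatenable, then $\mathcal{C}(B')\cdot\mathcal{C}(B'')=\mathcal{C}(B'\odot B'')$, where $B'\odot B''=(sc'\cdot sc'')\cup fl'\cup fl''$.
   Context: $\Sigma$ is a finite alphabet, $\mathring\Sigma=\{\mathring a\mid a\in\Sigma\}$ a disjoint (''dotted'') copy, and $\widetilde\Sigma=\Sigma\cup\mathring\Sigma$. The map $dot:\widetilde\Sigma^*\to\mathring\Sigma^*$ replaces each letter $a\in\Sigma$ by $\mathring a$ and leaves dotted letters unchanged. The match operation $@$ on letters is: $a@\mathring a=\mathring a@a=a$, $\mathring a@\mathring a=\mathring a$ for $a\in\Sigma$, undefined otherwise. For words $w,w'\in\widetilde\Sigma^n$, $w@w'=(w(1)@w'(1))\cdots(w(n)@w'(n))$ if every letterwise match is defined ($\epsilon@\epsilon=\epsilon$); otherwise (including unequal lengths) undefined. For languages, $B_1@B_2=\{w_1@w_2\mid w_1\in B_1,w_2\in B_2, w_1@w_2\text{ defined}\}$. Define $B^{0@}=B$, $B^{i@}=B^{(i-1)@}@B$, $B^@=\bigcup_{i\ge0}B^{i@}$, and $\mathcal{C}(B)=B^@\cap\Sigma^*$. $B$ is unproductive if $\mathcal{C}(B)=\emptyset$; $(B_1,B_2)$ is unmatchable if $B_1@B_2=\emptyset$. A base $B\subseteq\widetilde\Sigma^*\setminus\mathring\Sigma^+$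 is in decomposed form with scaffold $sc$ and fill $fl$ if $B$ is the disjoint union of $sc$ and $fl$, $fl$ is unproductive and $(sc,sc)$ is unmatchable. Decomposed bases $B',B''$ (scaffolds $sc',sc''$, fills $fl',fl''$) are concatenable if $B'\odot B''=(sc'\cdot sc'')\cup fl'\cup fl''$ is in decomposed form with scaffold $sc'\cdot sc''$ and fill $fl'\cup fl''$, and for all $w',w''\in\widetilde\Sigma^+$, $y'\in sc'$, $y''\in sc''$: (i) [there exists $x'\in fl'$ with $w'=x'\cdot dot(y'')$ and $x'@y'$ defined] if and only if [$w'\in fl'$ and $w'@(y'y'')$ is defined]; (ii) [there exists $x''\in fl''$ with $w''=dot(y')\cdot x''$ and $x''@y''$ defined] if and only if [$w''\in fl''$ and $w''@(y'y'')$ is defined]. *)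

(* Defs.v *)
From mathcomp Require Import all_boot.
Set Implicit Arguments. Unset Strict Implicit. Unset Printing Implicit Defensive.

Section Defs.
Variable Sigma : finType.

(* letters of the extended alphabet: Pl a = a in Sigma, Dt a = dotted a *)
Inductive ltr := Pl of Sigma | Dt of Sigma.

Definition word := seq ltr.
Definition lang := word -> Prop.

Definition is_plain (l : ltr) : bool := if l is Pl _ then true else false.
Definition is_dotted (l : ltr) : bool := if l is Dt _ then true else false.

Definition dotl (l : ltr) : ltr := match l with Pl a => Dt a | Dt a => Dt a end.
Definition dot (w : word) : word := map dotl w.

Definition lmatch (l1 l2 : ltr) : option ltr :=
  match l1, l2 with
  | Pl a, Dt b => if a == b then Some (Pl a) else None
  | Dt a, Pl b => if a == b then Some (Pl a) else None
  | Dt a, Dt b => if a == b then Some (Dt a) else None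
  | Pl _, Pl _ => None
  end.

Fixpoint wmatch (w1 w2 : word) : option word :=
  match w1, w2 with
  | [::], [::] => Some [::]
  | l1 :: w1', l2 :: w2' =>
      match lmatch l1 l2, wmatch w1' w2' with
      | Some l, Some w => Some (l :: w)
      | _, _ => None
      end
  | _, _ => None
  end.

Definition defined (o : option word) : Prop := exists w, o = Some w.

Definition langmatch (B1 B2 : lang) : lang :=
  fun w => exists w1 w2, B1 w1 /\ B2 w2 /\ wmatch w1 w2 = Some w.

Fixpoint mpow (B : lang) (i : nat) : lang :=
  match i with
  | 0 => B
  | i'.+1 => langmatch (mpow B i') B
  end.

Definition mstar (B : lang) : lang := fun w => exists i, mpow B i w.

Definition cl (B : lang) : lang := fun w => mstar B w /\ all is_plain w.

Definition lconcat (L1 L2 : lang) : lang :=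
  fun w => exists u v, L1 u /\ L2 v /\ w = u ++ v.

Definition unproductive (B : lang) : Prop := forall w, ~ cl B w.
Definition unmatchable (B1 B2 : lang) : Prop := forall w, ~ langmatch B1 B2 w.

Definition is_base (B : lang) : Prop :=
  forall w, B w -> ~ (w <> [::] /\ all is_dotted w).

Definition decomposed (B sc fl : lang) : Prop :=
  [/\ is_base B,
      (forall w, B w <-> sc w \/ fl w),
      (forall w, ~ (sc w /\ fl w)),
      unproductive fl &
      unmatchable sc sc].

Definition odot (sc' fl' sc'' fl'' : lang) : lang :=
  fun w => lconcat sc' sc'' w \/ fl' w \/ fl'' w.

Definition concatenable (sc' fl' sc'' fl'' : lang) : Prop :=
  [/\ decomposed (odot sc' fl' sc'' fl'') (lconcat sc' sc'')
        (fun w => fl' w \/ fl'' w),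
      (forall w' y' y'', w' <> [::] -> sc' y' -> sc'' y'' ->
         ((exists x', fl' x' /\ w' = x' ++ dot y'' /\ defined (wmatch x' y'))
          <-> (fl' w' /\ defined (wmatch w' (y' ++ y''))))) &
      (forall w'' y' y'', w'' <> [::] -> sc' y' -> sc'' y'' ->
         ((exists x'', fl'' x'' /\ w'' = dot y' ++ x'' /\ defined (wmatch x'' y''))
          <-> (fl'' w'' /\ defined (wmatch w'' (y' ++ y'')))))].

End Defs.

(* Main.v *)
Require Import Defs.
From mathcomp Require Import all_boot.
From Stdlib Require List Classical.
Set Implicit Arguments. Unset Strict Implicit. Unset Printing Implicit Defensive.
Section S.
Variable Sigma : finType.
Implicit Types (x y z : word Sigma) (a b c : option (word Sigma)).

Lemma lcomm (l1 l2 : ltr Sigma) : lmatch l1 l2 = lmatch l2 l1.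
Proof. by case: l1 => a; case: l2 => b //=; rewrite eq_sym; case: eqP => // ->. Qed.

Lemma wcomm x y : wmatch x y = wmatch y x.
Proof. elim: x y => [|l x IH] [|l' y] //=. by rewrite lcomm IH. Qed.

Lemma lassoc (l1 l2 l3 : ltr Sigma) :
  obind (fun l => lmatch l l3) (lmatch l1 l2) = obind (fun l => lmatch l1 l) (lmatch l2 l3).
Proof.
case: l1 => a; case: l2 => b; case: l3 => c /=;
repeat (case: eqP => /= [?|?]; subst) => //=; rewrite ?eqxx //;
repeat (case: eqP => /= [?|?]; subst) => //.
Qed.

Definition ocons (o : option (ltr Sigma)) (w : option (word Sigma)) :=
  match o, w with Some l, Some w => Some (l :: w) | _, _ => None end.

Lemma wcons l1 l2 x y : wmatch (l1 :: x) (l2 :: y) = ocons (lmatch l1 l2) (wmatch x y).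
Proof. by []. Qed.

Lemma wassoc x y z :
  obind (fun w => wmatch w z) (wmatch x y) = obind (fun w => wmatch x w) (wmatch y z).
Proof.
elim: x y z => [|l1 x IH] [|l2 y] [|l3 z] //=.
all: try by repeat first [case: (lmatch _ _) => /= [?|] | case: (wmatch _ _) => /= [?|]]. 
have H1 := IH y z; have H2 := lassoc l1 l2 l3; move: H1 H2.
case: (wmatch x y) => [xy|]; case: (wmatch y z) => [yz|];
case: (lmatch l1 l2) => [a|]; case: (lmatch l2 l3) => [b|] //=;
try case: (lmatch a l3) => [?|]; try case: (lmatch l1 b) => [?|];
try case: (wmatch xy z) => [?|]; try case: (wmatch x yz) => [?|] => //=; congruence.
Qed.

Definition om a b := match a, b with Some x, Some y => wmatch x y | _, _ => None end.
Definition Fo a (L : seq (word Sigma)) := foldl (fun acc x => om acc (Some x)) a L.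

Lemma omC a b : om a b = om b a.
Proof. by case: a => [x|]; case: b => [y|] //=; rewrite wcomm. Qed.

Lemma omA a b c : om (om a b) c = om a (om b c).
Proof.
case: a => [x|]; case: b => [y|]; case: c => [z|] //=.
- by have := wassoc x y z; case: (wmatch x y); case: (wmatch y z).
- by case: (wmatch x y).
Qed.

Lemma Fo_None L : Fo None L = None.
Proof. by elim: L. Qed.

Lemma FoP1 a b L : Fo (om a b) L = om a (Fo b L).
Proof. elim: L b => [|x L IH] b //=. by rewrite /Fo /= -/(Fo _ _) omA -IH. Qed.

Lemma reorder x y A C : Fo (Some x) (A ++ y :: C) = Fo (Some y) (x :: A ++ C).
Proof.
rewrite /Fo foldl_cat /= -!/(Fo _ _) omC FoP1.
by rewrite -[wmatch y x]/(om (Some y) (Some x)) FoP1 /Fo foldl_cat.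
Qed.

Lemma pair_def x z A C w : Fo (Some x) (A ++ z :: C) = Some w -> defined (wmatch z x).
Proof.
rewrite reorder /=; case E: (wmatch z x) => [v|]; first by exists v.
by rewrite -/(Fo None _) Fo_None.
Qed.

Lemma lm_dot (l1 l2 l : ltr Sigma) : lmatch l1 l2 = Some l -> dotl l = dotl l1 /\ dotl l = dotl l2.
Proof. by case: l1 => a; case: l2 => b //=; case: eqP => // -> [<-]. Qed.

Lemma wm_dot x y z : wmatch x y = Some z -> dot z = dot x /\ dot z = dot y.
Proof.
elim: x y z => [|l x IH] [|l' y] z //=; first by case=> <-.
case E: (lmatch l l') => [m|] //; case E2: (wmatch x y) => [v|] // [<-] /=.
have [-> ->] := lm_dot E; have [-> ->] := IH _ _ E2; done.
Qed.

Lemma dot_size x y : dot x = dot y -> size x = size y.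
Proof. by move=> E; rewrite -(size_map (@dotl Sigma) x) -(size_map (@dotl Sigma) y); congr size. Qed.

Lemma Fo_dot y R u : Fo (Some y) R = Some u -> dot u = dot y.
Proof.
elim: R y => [|x R IH] y /=; first by case=> ->.
case E: (wmatch y x) => [v|]; last by rewrite -/(Fo None _) Fo_None.
move/IH => ->; by have [] := wm_dot E.
Qed.

Lemma wm_self_dot x : wmatch x (dot x) = Some x.
Proof. elim: x => [|[a|a] x IH] //=; by rewrite eqxx IH. Qed.

Lemma wm_cat x1 x2 y1 y2 : size x1 = size y1 ->
  wmatch (x1 ++ x2) (y1 ++ y2) =
  match wmatch x1 y1, wmatch x2 y2 with Some u, Some v => Some (u ++ v) | _, _ => None end.
Proof.
elim: x1 y1 => [|l x1 IH] [|l' y1] //=; first by case: (wmatch x2 y2).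
move=> [/IH ->]; case: (lmatch l l') => [m|]; case: (wmatch x1 y1) => [?|];
  by case: (wmatch x2 y2).
Qed.

Lemma Fo_rcons a L y : Fo a (rcons L y) = om (Fo a L) (Some y).
Proof. by rewrite /Fo -cats1 foldl_cat. Qed.

Lemma mstarE (B : lang Sigma) w : mstar B w <->
  exists x L, B x /\ (forall z, List.In z L -> B z) /\ Fo (Some x) L = Some w.
Proof.
split.
- case=> i; elim: i w => [|i IH] w /=; first by move=> Bw; exists w, [::].
  case=> w1 [w2 [/IH [x [L [Bx [BL E]]]] [Bw2 E2]]].
  exists x, (rcons L w2); split=> //; split.
    by move=> z; rewrite -cats1 List.in_app_iff => -[/BL|[<-|[]]].
  by rewrite Fo_rcons E.
- case=> x [L [Bx [BL E]]]; move: BL E; elim/last_ind: L w => [|L y IH] w BL.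
    by move=> E; exists 0; move: E; rewrite /Fo /= => -[<-].
  rewrite Fo_rcons.
  case E: (Fo (Some x) L) => [v|] //= E2.
  have [|i Hi] := IH v _ E.
    by move=> z Hz; apply: BL; rewrite -cats1 List.in_app_iff; left.
  exists i.+1 => /=; exists v, y; split=> //; split=> //.
  by apply: BL; rewrite -cats1 List.in_app_iff; right; left.
Qed.

Lemma inC (z : word Sigma) (A C : seq (word Sigma)) :
  List.In z (A ++ C) <-> List.In z A \/ List.In z C.
Proof. elim: A => [|a A IH] /=; first by intuition. rewrite IH; tauto. Qed.

Lemma struct (B sc fl : lang Sigma) u : decomposed B sc fl -> cl B u ->
  exists y R, sc y /\ (forall z, List.In z R -> fl z /\ defined (wmatch z y))
     /\ Fo (Some y) R = Some u.
Proof.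
move=> [_ BE Dis Unp Unm] [/mstarE [x0 [L0 [Bx0 [BL0 E]]]] Pu].
have BK : forall z, List.In z (x0 :: L0) -> B z by move=> z [<-|/BL0].
case: (Classical_Prop.classic (exists y, List.In y (x0 :: L0) /\ sc y)).
- move=> [y [Hy scy]].
  have [R [ER subR]] : exists R, Fo (Some y) R = Some u /\ (forall z, List.In z R -> B z).
    case: Hy => [Ey|Hy].
      by subst y; exists L0.
    have [A [C EL]] := List.in_split _ _ Hy; subst L0.
    exists (x0 :: A ++ C); rewrite -reorder; split=> // z Hz; apply: BK.
    move: Hz => /= [<-|]; first by left.
    by rewrite !inC /=; tauto.
  exists y, R; split=> //; split=> // z Hz.
  have [R1 [R2 ER']] := List.in_split _ _ Hz; subst R.
  have [v Ev] := pair_def ER.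
  split; last by exists v.
  have [] := (BE z).1 (subR _ Hz) => // scz.
  by case: (Unm v); exists z, y.
- move=> Hn; case: (Unp u); split=> //; apply/mstarE; exists x0, L0.
  have H : forall z, List.In z (x0 :: L0) -> fl z.
    move=> z Hz; have [] := (BE z).1 (BK _ Hz) => // scz.
    by case: Hn; exists z.
  split; first by apply: H; left.
  by split=> // z Hz; apply: H; right.
Qed.

Lemma inM (f : word Sigma -> word Sigma) z R :
  List.In z (map f R) -> exists x, List.In x R /\ z = f x.
Proof.
elim: R => [|r R IH] //= [<-|/IH [x [Hx ->]]]; first by exists r; split=> //; left.
by exists x; split=> //; right.
Qed.

Lemma def_size x y : defined (wmatch x y) -> size x = size y.
Proof. by case=> v /wm_dot [E1 E2]; apply: dot_size; rewrite -E1 -E2. Qed.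

Lemma F1 (b : word Sigma) R : forall (a c : word Sigma), (forall x, List.In x R -> size x = size a) ->
  Fo (Some a) R = Some c ->
  Fo (Some (a ++ b)) (map (fun x => x ++ dot b) R) = Some (c ++ b).
Proof.
elim: R => [|x R IH] a c HS /=; first by case=> <-.
case E: (wmatch a x) => [d|]; last by rewrite -/(Fo None _) Fo_None.
move=> E2; rewrite wm_cat; last by rewrite (HS x) //; left.
rewrite E wm_self_dot; apply: IH E2 => x' Hx'.
have [E3 _] := wm_dot E; rewrite (dot_size E3); apply: HS; by right.
Qed.

Lemma F2 (a y : word Sigma) R : dot a = dot y -> forall (b c : word Sigma), (forall x, List.In x R -> size x = size b) ->
  Fo (Some b) R = Some c ->
  Fo (Some (a ++ b)) (map (fun x => dot y ++ x) R) = Some (a ++ c).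
Proof.
move=> Ha; elim: R => [|x R IH] b c HS /=; first by case=> <-.
case E: (wmatch b x) => [d|]; last by rewrite -/(Fo None _) Fo_None.
move=> E2; rewrite wm_cat; last by rewrite size_map; apply: dot_size.
have -> : wmatch a (dot y) = Some a by rewrite -Ha wm_self_dot.
rewrite E; apply: IH E2 => x' Hx'.
have [E3 _] := wm_dot E; rewrite (dot_size E3); apply: HS; by right.
Qed.

Lemma G (P1 P2 : lang Sigma) y1 y2 R : forall (a b w : word Sigma), dot a = dot y1 -> dot b = dot y2 ->
  (forall z, List.In z R ->
     (exists x, P1 x /\ z = x ++ dot y2 /\ defined (wmatch x y1)) \/
     (exists x, P2 x /\ z = dot y1 ++ x /\ defined (wmatch x y2))) ->
  Fo (Some (a ++ b)) R = Some w ->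
  exists u v L1 L2, w = u ++ v /\ (forall x, List.In x L1 -> P1 x) /\
    (forall x, List.In x L2 -> P2 x) /\ Fo (Some a) L1 = Some u /\ Fo (Some b) L2 = Some v.
Proof.
elim: R => [|z R IH] a b w Ha Hb HR /=.
  by case=> <-; exists a, b, [::], [::].
have HR' : forall z, List.In z R ->
     (exists x, P1 x /\ z = x ++ dot y2 /\ defined (wmatch x y1)) \/
     (exists x, P2 x /\ z = dot y1 ++ x /\ defined (wmatch x y2)).
  by move=> z' Hz'; apply: HR; right.
case: (HR z (or_introl erefl)) => [[x [Px [-> Dx]]]|[x [Px [-> Dx]]]].
- rewrite wm_cat; last by rewrite (def_size Dx); apply: dot_size.
  have -> : wmatch b (dot y2) = Some b by rewrite -Hb wm_self_dot.
  case E: (wmatch a x) => [d|]; last by rewrite -/(Fo None _) Fo_None.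
  have [E3 _] := wm_dot E.
  move=> /(IH d b w) [||//|u [v [L1 [L2 [-> [H1 [H2 [E1 E2]]]]]]]] //; first by rewrite E3.
  exists u, v, (x :: L1), L2; split=> //; split; first by move=> x' [<-|/H1].
  by split=> //; split=> //=; rewrite E.
- rewrite wm_cat; last by rewrite size_map; apply: dot_size.
  have -> : wmatch a (dot y1) = Some a by rewrite -Ha wm_self_dot.
  case E: (wmatch b x) => [d|]; last by rewrite -/(Fo None _) Fo_None.
  have [E3 _] := wm_dot E.
  move=> /(IH a d w) [//||//|u [v [L1 [L2 [-> [H1 [H2 [E1 E2]]]]]]]]; first by rewrite E3.
  exists u, v, L1, (x :: L2); split=> //; split=> //; split; first by move=> x' [<-|/H2].
  by split=> //=; rewrite E.
Qed.
End S.

Theorem theorem2 (Sigma : finType) (B' sc' fl' B'' sc'' fl'' : lang Sigma) :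
  decomposed B' sc' fl' ->
  decomposed B'' sc'' fl'' ->
  concatenable sc' fl' sc'' fl'' ->
  forall w : word Sigma,
    lconcat (cl B') (cl B'') w <->
    cl (odot sc' fl' sc'' fl'') w.
Proof.
move=> D1 D2 CC w.
have D1' := D1; have D2' := D2; have CC' := CC.
case: D1' => [_ BE1 _ Unp1 Unm1]; case: D2' => [_ BE2 _ Unp2 Unm2].
case: CC' => [D C1 C2].
have nfl1 : forall z, fl' z -> z <> [::].
  by move=> z Hz Ez; subst z; apply: (Unp1 [::]); split=> //; exists 0.
have nfl2 : forall z, fl'' z -> z <> [::].
  by move=> z Hz Ez; subst z; apply: (Unp2 [::]); split=> //; exists 0.
split.
- move=> [u [v [cu [cv ->]]]].
  have [y1 [R1 [s1 [H1 E1]]]] := struct D1 cu.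
  have [y2 [R2 [s2 [H2 E2]]]] := struct D2 cv.
  have ny2 : y2 <> [::] by move=> Ey; subst y2; apply: (Unm2 [::]); exists [::], [::].
  split; last by rewrite all_cat cu.2 cv.2.
  apply/mstarE; exists (y1 ++ y2),
    (map (fun x => x ++ dot y2) R1 ++ map (fun x => dot y1 ++ x) R2).
  split; first by left; exists y1, y2.
  split.
  + move=> z /inC [/inM [x [Hx ->]]|/inM [x [Hx ->]]].
    * right; left.
      have [Hf Hd] := H1 x Hx.
      have nz : x ++ dot y2 <> [::] by case: (y2) ny2 => // l s _; case: x {Hx Hf Hd}.
      by have [] := (C1 (x ++ dot y2) y1 y2 nz s1 s2).1; first by exists x.
    * right; right.
      have [Hf Hd] := H2 x Hx.
      have nz : dot y1 ++ x <> [::] by case: (y1); case: x Hf {Hx Hd} => // /nfl2.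
      by have [] := (C2 (dot y1 ++ x) y1 y2 nz s1 s2).1; first by exists x.
  + rewrite /Fo foldl_cat -!/(Fo _ _).
    rewrite (@F1 _ y2 R1 y1 u) //; last by move=> x Hx; apply: def_size; case: (H1 x Hx).
    apply: F2 => //; first exact: Fo_dot E1.
    by move=> x Hx; apply: def_size; case: (H2 x Hx).
- move=> cw.
  have [y [R [[y1 [y2 [s1 [s2 Ey]]]] [HR E]]]] := struct D cw; subst y.
  have := @G _ fl' fl'' y1 y2 R y1 y2 w erefl erefl.
  case=> [z Hz|//|u [v [L1 [L2 [Ew [HL1 [HL2 [E1 E2]]]]]]]].
    have [[Hf|Hf] Hd] := HR z Hz.
      by left; apply: (C1 z y1 y2 (nfl1 _ Hf) s1 s2).2.
    by right; apply: (C2 z y1 y2 (nfl2 _ Hf) s1 s2).2.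
  have := cw.2; rewrite Ew all_cat => /andP [pu pv].
  exists u, v; split; last split=> //.
  + split=> //; apply/mstarE; exists y1, L1; split; first by apply/BE1; left.
    by split=> // x Hx; apply/BE1; right; apply: HL1.
  + split=> //; apply/mstarE; exists y2, L2; split; first by apply/BE2; left.
    by split=> // x Hx; apply/BE2; right; apply: HL2.
Qed.
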